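(* Let $n\ge 2$ be an integer. Suppose that for all integers $m,k$ with $2\le m\le n$ and $2\le k\le 2^{m-1}+1$ one has $$v_2\big(s(2^n,2^m-k)\big)=2^n-2^m-(n-m)\Big(2^m-2\Big\lfloor\frac{k}{2}\Big\rfloor\Big)+m-2-v_2\Big(\Big\lfloor\frac{k}{2}\Big\rfloor\Big)+(n-1)\epsilon_k,$$ where $\epsilon_k=0$ if $k$ is even and $\epsilon_k=1$ if $k$ is odd. Then for every integer $t$ with $1\le t\le 2^n$, $$v_2\big(s_{2^n}(2^n,t)\big)=v_2\big(s(2^n,t)\big)\quad\text{and}\quad v_2\big(s_{2^n}(2^n,t)-s(2^n,t)\big)\ge v_2\big(s(2^n,t)\big)+2.$$
   Context: The (unsigned) Stirling numbers of the first kind $s(n,k)$ are defined by $x(x+1)\cdots(x+n-1)=\sum_{k=0}^n s(n,k)x^k$. For a nonnegative integer $m$, $s_m(n,k)$ is defined by $(x+m)(x+m+1)\cdots(x+m+n-1)=\sum_{k=0}^n s_m(n,k)x^k$. $v_2$ is the $2$-adic valuation, with the convention $v_2(0)=+\infty$. *)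

(* Defs.v *)
From HB Require Import structures.
From mathcomp Require Import all_boot all_order all_algebra.
Set Implicit Arguments. Unset Strict Implicit. Unset Printing Implicit Defensive.
Import Order.TTheory GRing.Theory Num.Theory.
Local Open Scope ring_scope.

Definition stirling1 (n k : nat) : int :=
  (\prod_(i < n) ('X + (i%:R)%:P) : {poly int})`_k.

Definition stirling1m (m n k : nat) : int :=
  (\prod_(i < n) ('X + ((m + i)%:R)%:P) : {poly int})`_k.

(* 2-adic valuation with values in nat extended by +oo (None = +oo). *)
Definition v2 (x : int) : option nat :=
  if x == 0 then None else Some (logn 2 `|x|%N).

Definition v2_eqZ (x : int) (r : int) : Prop :=
  match v2 x with Some e => (e%:Z = r) | None => False end.

Definition ext_le_add (a : option nat) (c : nat) (b : option nat) : Prop :=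
  match a, b with
  | _, None => True
  | None, Some _ => False
  | Some x, Some y => (x + c <= y)%N
  end.

(* Main.v *)
Require Import Defs.
From HB Require Import structures.
From mathcomp Require Import all_boot all_order all_algebra.
From mathcomp Require Import zify ring lra.
From Stdlib Require Import Lia.
Import Order.TTheory GRing.Theory Num.Theory.
Local Open Scope ring_scope.

Lemma stir_rec n k : stirling1 n.+1 k =
  (if k == 0%N then 0 else stirling1 n k.-1) + stirling1 n k * n%:R.
Proof.
by rewrite /stirling1 big_ord_recr /= mulrDr coefD coefMX coefMC.
Qed.

Lemma stir_big n k : (n < k)%N -> stirling1 n k = 0.
Proof.
elim: n k => [|n IH] k hk.
  by rewrite /stirling1 big_ord0 coef1; case: k hk.
rewrite stir_rec IH ?mul0r ?addr0; last by lia.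
case: k hk => //= k hk; rewrite (IH k.+1) ?mul0r ?addr0 //; clear IH; lia.
Qed.

Lemma stir_diag n : stirling1 n n = 1.
Proof.
elim: n => [|n IH]; first by rewrite /stirling1 big_ord0 coef1.
by rewrite stir_rec /= IH stir_big ?mul0r ?addr0.
Qed.

Lemma stir_sub1 n : stirling1 n.+1 n = ('C(n.+1, 2))%:R.
Proof.
elim: n => [|n IH]; first by rewrite stir_rec /= stir_diag mul1r add0r.
by rewrite stir_rec /= IH stir_diag mul1r (binS n.+1 1) bin1 natrD addrC.
Qed.

Lemma coefXaddC (c : int) j t : (('X + c%:P)^+j)`_t = c ^+ (j - t) *+ 'C(j, t).
Proof.
elim: j t => [|j IH] t.
  by rewrite expr0 coef1; case: t => [|t] //=; rewrite bin0n.
rewrite exprSr mulrDr coefD coefMX coefMC.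
case: t => [|t] /=.
  by rewrite IH !bin0 !subn0 exprSr mulr1n mulr1n add0r.
rewrite !IH subSS binS mulrnDr [in RHS]addrC; congr (_ + _).
have [ltj|lej] := ltnP t j.
  have -> : (j - t = (j - t.+1).+1)%N by lia.
  by rewrite exprSr mulrnAl.
by rewrite bin_small ?mulr0n ?mul0r //; lia.
Qed.

Lemma comp_eq (a M : nat) :
  (\prod_(i < M) ('X + ((a + i)%:R)%:P) : {poly int}) =
  (\prod_(i < M) ('X + (i%:R)%:P)) \Po ('X + (a%:R)%:P).
Proof.
elim: M => [|M IH]; first by rewrite !big_ord0 comp_polyC.
rewrite !big_ord_recr /= comp_polyM IH; congr (_ * _).
by rewrite comp_polyD comp_polyX comp_polyC natrD rmorphD addrA.
Qed.

Lemma chainC (E : nat -> nat) (n N : nat) (hN : ~~ odd N)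
  (hA : forall t, odd t -> (1 <= t)%N -> (t < N)%N ->
        (E t + n * t + 1 = E t.+1 + n * t.+1)%N)
  (hB : forall t, ~~ odd t -> (2 <= t)%N -> (t + 2 <= N)%N ->
        (E t + n * t + 3 <= E (t + 2) + n * (t + 2))%N) :
  forall t j, (1 <= t)%N -> (t < j)%N -> (j <= N)%N ->
    (E t + n * t + 2 <= E j + n * j + ((j == t.+1) && odd t))%N.
Proof.
pose G t := (E t + n * t)%N.
have step : forall t, (1 <= t)%N -> (t < N)%N ->
    (G t + 1 + ~~ odd t <= G t.+1)%N.
  move=> t h1 h2; rewrite /G; case: (boolP (odd t)) => ot /=.
    by rewrite (hA t ot h1 h2) addn0.
  have ht2 : (2 <= t)%N by case: t h1 ot {h2} => [|[|t]].
  have ht3 : (t + 2 <= N)%N.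
    have : t.+1 != N by apply/eqP => e; move: hN; rewrite -e /= ot.
    lia.
  have h := hA t.+1 ltac:(by rewrite /= ot) ltac:(lia) ltac:(lia).
  have := hB t ot ht2 ht3; rewrite !addn2 => h'.
  lia.
have step1 : forall t, (1 <= t)%N -> (t < N)%N -> (G t + 1 <= G t.+1)%N.
  move=> t h1 h2; apply: leq_trans (step t h1 h2); exact: leq_addr.
have chain : forall d t, (1 <= t)%N -> (t + d <= N)%N -> (G t + d <= G (t + d))%N.
  elim=> [|d IH] t h1 h2; first by rewrite !addn0.
  have := step1 (t + d)%N ltac:(lia) ltac:(lia).
  have := IH t h1 ltac:(lia).
  rewrite !addnS; lia.
move=> t j h1 h2 h3.
have := step t h1 ltac:(lia); rewrite /G => st.
have [ej|nej] := eqVneq j t.+1.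
  subst j; case: (odd t) st => /=; lia.
have := chain (j - t.+1)%N t.+1 ltac:(lia) ltac:(lia).
have -> : (t.+1 + (j - t.+1) = j)%N by lia.
rewrite /G /=; case: (~~ odd t) st => /=; lia.
Qed.

Lemma dvd_logn (x : int) a : x != 0 -> ((2 ^ a)%:Z %| x)%Z -> (a <= logn 2 `|x|)%N.
Proof.
move=> nz; rewrite dvdzE absz_nat -pfactor_dvdn //; by rewrite absz_gt0.
Qed.

Lemma dvd_self (x : int) : ((2 ^ logn 2 `|x|)%:Z %| x)%Z.
Proof. by rewrite dvdzE absz_nat pfactor_dvdnn. Qed.

Lemma ndvd_self (x : int) : x != 0 -> ~~ ((2 ^ (logn 2 `|x|).+1)%:Z %| x)%Z.
Proof.
move=> nz; apply/negP => /(@dvd_logn x _ nz); by rewrite ltnn.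
Qed.

Lemma logn_int_eq (x : int) a : x != 0 -> ((2 ^ a)%:Z %| x)%Z ->
  ~~ ((2 ^ a.+1)%:Z %| x)%Z -> logn 2 `|x| = a.
Proof.
move=> nz h1 h2; apply/eqP; rewrite eqn_leq (@dvd_logn x a nz h1) andbT.
rewrite leqNgt; apply/negP => lt; move/negP: h2; apply.
apply: dvdz_trans (dvd_self x); rewrite dvdzE !absz_nat dvdn_exp2l //.
Qed.

Lemma v2eq x r : v2_eqZ x r -> x != 0 /\ (logn 2 `|x|)%:Z = r.
Proof. by rewrite /v2_eqZ /v2; case: eqP. Qed.

Definition Hfor (n : nat) := forall m k : nat, (2 <= m)%N -> (m <= n)%N ->
       (2 <= k)%N -> (k <= 2 ^ m.-1 + 1)%N ->
       v2_eqZ (stirling1 (2 ^ n) (2 ^ m - k))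
         ((2 ^ n)%:Z - (2 ^ m)%:Z
          - (n - m)%:Z * ((2 ^ m)%:Z - 2 * (k %/ 2)%:Z)
          + m%:Z - 2 - (logn 2 (k %/ 2))%:Z
          + (n - 1)%:Z * (odd k)%:Z).

Definition En n t := logn 2 `|stirling1 (2 ^ n) t|.

Lemma expS1 m : (0 < m)%N -> (2 ^ m = 2 * 2 ^ m.-1)%N.
Proof. by case: m => // m _; rewrite expnS. Qed.

Lemma block n t : (1 <= t)%N -> (t + 2 <= 2 ^ n)%N ->
  exists m k, [/\ (2 <= m)%N, (m <= n)%N, (2 <= k)%N,
     (k <= 2 ^ m.-1 + 1)%N & (t + k = 2 ^ m)%N].
Proof.
move=> h1 h2.
set L := trunc_log 2 t.+1.
have hL1 : (2 ^ L <= t.+1)%N by apply: trunc_logP.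
have hL2 : (t.+1 < 2 ^ L.+1)%N by apply: trunc_log_ltn.
have L1 : (1 <= L)%N.
  rewrite leqNgt; apply/negP; rewrite ltnS leqn0 => /eqP e.
  by move: hL2; rewrite e /=; lia.
have Ln : (L < n)%N.
  by rewrite -(@ltn_exp2l 2) //; lia.
exists L.+1, (2 ^ L.+1 - t)%N; split => //=; try lia.
by rewrite expnS; lia.
Qed.

Lemma Hval n (H : Hfor n) m k : (2 <= m)%N -> (m <= n)%N ->
  (2 <= k)%N -> (k <= 2 ^ m.-1 + 1)%N ->
  stirling1 (2 ^ n) (2 ^ m - k) != 0 /\
  (En n (2 ^ m - k))%:Z = (2 ^ n)%:Z - (2 ^ m)%:Z
          - (n - m)%:Z * ((2 ^ m)%:Z - 2 * (k %/ 2)%:Z)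
          + m%:Z - 2 - (logn 2 (k %/ 2))%:Z
          + (n - 1)%:Z * (odd k)%:Z.
Proof. by move=> *; apply: v2eq; apply: H. Qed.

Lemma EN n : En n (2 ^ n) = 0%N.
Proof. by rewrite /En stir_diag. Qed.

Lemma sN1 n : (1 <= n)%N ->
  stirling1 (2 ^ n) (2 ^ n).-1 = (2 ^ n.-1 * (2 ^ n).-1)%:R.
Proof.
move=> hn.
have hp : (0 < 2 ^ n)%N by rewrite expn_gt0.
rewrite -{1}(prednK hp) stir_sub1 (prednK hp) bin2 (@expS1 n hn) -mulnA mul2n doubleK.
done.
Qed.

Lemma EN1 n : (1 <= n)%N ->
  stirling1 (2 ^ n) (2 ^ n).-1 != 0 /\ En n (2 ^ n).-1 = n.-1.
Proof.
move=> hn; rewrite /En sN1 // natz absz_nat.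
have hp : (0 < 2 ^ n)%N by rewrite expn_gt0.
have o : odd (2 ^ n).-1.
  by rewrite -subn1 oddB ?oddX /= ?orbF //; case: (n) hn.
have pos : (0 < (2 ^ n).-1)%N by move: o; case: (2 ^ n)%N => [|[|k]].
split.
  by rewrite -natz pnatr_eq0 -lt0n muln_gt0 expn_gt0 pos.
rewrite lognM ?expn_gt0 // pfactorK //.
suff -> : logn 2 (2 ^ n).-1 = 0%N by rewrite addn0.
apply/eqP; rewrite -leqn0 leqNgt; apply/negP => h.
have := pfactor_dvdnn 2 (2 ^ n).-1.
have : (2 ^ 1 %| 2 ^ logn 2 (2 ^ n).-1)%N by rewrite dvdn_exp2l.
move=> d1 d2; have := dvdn_trans d1 d2; rewrite expn1 dvdn2 o.
done.
Qed.

Lemma hA n (hn : (2 <= n)%N) (H : Hfor n) t : odd t -> (1 <= t)%N -> (t < 2 ^ n)%N ->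
  (En n t + n * t + 1 = En n t.+1 + n * t.+1)%N.
Proof.
move=> ot h1 h2.
have [e|ne] := eqVneq t.+1 (2 ^ n)%N.
  have -> : t = (2 ^ n).-1 by rewrite -e.
  have p := prednK (expn_gt0 2 n).
  have [_ E1] := @EN1 n (ltnW hn).
  rewrite p EN E1; move: p; set M := (2 ^ n)%N => p.
  rewrite -{2}p mulnS; lia.
have h3 : (t + 2 <= 2 ^ n)%N by lia.
have [m [k [m2 mn k2 kb tk]]] := @block n t h1 h3.
have ok : odd k.
  have : odd (t + k) = odd (2 ^ m) by rewrite tk.
  by rewrite oddD oddX ot /=; case: (m) m2 => // m' _ /=; case: (odd k).
set q := k./2.
have kq : k = (q.*2).+1.
  by rewrite /q -{1}(odd_double_half k) ok.
have [nz1 e1] := @Hval n H m k m2 mn k2 kb.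
have [nz2 e2] := @Hval n H m (k - 1) m2 mn ltac:(lia) ltac:(lia).
have r1 : (2 ^ m - k = t)%N by lia.
rewrite r1 in e1 nz1.
have r2 : (2 ^ m - (k - 1) = t.+1)%N by lia.
rewrite r2 in e2 nz2.
have d1 : (k %/ 2 = q)%N by rewrite divn2.
have d2 : ((k - 1) %/ 2 = q)%N by rewrite kq subn1 /= divn2 doubleK.
have o2 : odd (k - 1) = false by rewrite kq subn1 /= odd_double.
rewrite d1 ok in e1; rewrite d2 o2 in e2.
move: e1 e2; set X := ((n - m)%:Z * _); set Y := (logn 2 q)%:Z.
move=> e1 e2; lia.
Qed.

Lemma logn_le x e : (0 < x)%N -> (x <= 2 ^ e)%N -> (logn 2 x <= e)%N.
Proof.
move=> x0 xe; rewrite -(@leq_exp2l 2) //.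
exact: leq_trans (dvdn_leq x0 (pfactor_dvdnn 2 x)) xe.
Qed.

Lemma hB n (hn : (2 <= n)%N) (H : Hfor n) t : ~~ odd t -> (2 <= t)%N ->
  (t + 2 <= 2 ^ n)%N ->
  (En n t + n * t + 3 <= En n (t + 2) + n * (t + 2))%N.
Proof.
move=> et h2 h3.
have en : ~~ odd (2 ^ n) by rewrite oddX /=; case: (n) hn.
rewrite mulnDr.
have [e|ne] := eqVneq (t + 2)%N (2 ^ n)%N.
  rewrite e EN.
  have [_ e1] := @Hval n H n 2 hn (leqnn n) (leqnn 2)
     ltac:(by rewrite addn1 ltnS expn_gt0).
  have r1 : (2 ^ n - 2 = t)%N by lia.
  rewrite r1 subnn logn1 /= in e1.
  lia.
have h4 : (t + 4 <= 2 ^ n)%N.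
  have : (t + 3)%N != (2 ^ n)%N.
    by apply/eqP => e; move: en; rewrite -e addn3 /= !negbK (negbTE et).
  lia.
have [m [k [m2 mn k2 kb tk]]] := @block n t ltac:(lia) h3.
have ek : ~~ odd k.
  have : odd (t + k) = odd (2 ^ m) by rewrite tk.
  by rewrite oddD oddX (negbTE et) /=; case: (m) m2 => // m' _ /= ->.
set q := k./2.
have kq : k = (2 * q)%N.
  by rewrite /q -{1}(odd_double_half k) (negbTE ek) add0n mul2n.
have [_ e1] := @Hval n H m k m2 mn k2 kb.
have r1 : (2 ^ m - k = t)%N by lia.
rewrite r1 in e1.
have d1 : (k %/ 2 = q)%N by rewrite divn2.
rewrite d1 (negbTE ek) in e1.
have [k2e|k4] := eqVneq k 2%N.
  (* boundary between blocks *)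
  have mlt : (m < n)%N.
    rewrite ltn_neqAle mn andbT; apply/eqP => emn.
    by move: ne; rewrite -emn -tk k2e eqxx.
  have m1 := ltnW m2.
  set P := (2 ^ m.-1)%N.
  have pm : (2 ^ m = 2 * P)%N by rewrite /P -expS1.
  have pm1 : (2 ^ m.+1 = 4 * P)%N by rewrite expnS pm; lia.
  have [_ e2] := @Hval n H m.+1 (2 ^ m) ltac:(lia) mlt
     ltac:(rewrite pm; lia) ltac:(by rewrite /= leq_addr).
  have r2 : (2 ^ m.+1 - 2 ^ m = t + 2)%N by lia.
  have d2 : ((2 ^ m) %/ 2 = P)%N by rewrite pm mulKn.
  rewrite r2 d2 /P pfactorK // oddX /= in e2.
  have : odd 2 = false by [].
  move: e1 e2; rewrite k2e in d1 *; rewrite -/P.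
  rewrite /q k2e /= logn1.
  set X1 := ((n - m)%:Z * _); set X2 := ((n - m.+1)%:Z * _).
  have hint : X2 = X1 + 2 * (n - m)%:Z - 2 * P%:Z.
    rewrite /X1 /X2 pm pm1.
    have -> : (n - m = (n - m.+1) + 1)%N by lia.
    rewrite !PoszD; ring.
  have -> : (m == 0%N) = false by case: (m) m1.
  move: hint; clearbody X1 X2; rewrite pm pm1 => hint E1 E2 _.
  lia.
have k4' : (4 <= k)%N by move: k2 k4; rewrite kq; lia.
have m3 : (3 <= m)%N.
  rewrite leqNgt; apply/negP => mle.
  have : m = 2%N by lia.
  move=> em; move: kb; rewrite em /=; lia.
set P := (2 ^ m.-2)%N.
have pm : (2 ^ m.-1 = 2 * P)%N by rewrite /P -expS1 //; case: (m) m3 => [|[|]].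
have qb : (q <= P)%N by move: kb; rewrite pm kq; lia.
have [_ e2] := @Hval n H m (k - 2) m2 mn ltac:(lia) ltac:(lia).
have r2 : (2 ^ m - (k - 2) = t + 2)%N by lia.
have d2 : ((k - 2) %/ 2 = q - 1)%N.
  have -> : (k - 2 = 2 * (q - 1))%N by lia.
  by rewrite mulKn.
have o2 : odd (k - 2) = false.
  have -> : (k - 2 = 2 * (q - 1))%N by lia.
  by rewrite oddM.
rewrite r2 d2 o2 in e2.
have lb : (logn 2 (q - 1) <= m - 2)%N.
  have -> : (m - 2 = m.-2)%N by lia.
  apply: logn_le; lia.
move: e1 e2.
set X1 := ((n - m)%:Z * _); set X2 := ((n - m)%:Z * _).
have hint : X2 = X1 + 2 * (n - m)%:Z.
  rewrite /X1 /X2.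
  have -> : (q = (q - 1) + 1)%N by lia.
  rewrite addnK !PoszD; ring.
move: hint; clearbody X1 X2 => hint E1 E2.
lia.
Qed.

Lemma nzs n (hn : (2 <= n)%N) (H : Hfor n) j : (1 <= j)%N -> (j <= 2 ^ n)%N ->
  stirling1 (2 ^ n) j != 0.
Proof.
move=> j1 jN.
have [e|ne] := eqVneq j (2 ^ n)%N; first by rewrite e stir_diag oner_neq0.
have [e|ne'] := eqVneq j (2 ^ n).-1%N.
  by rewrite e; have [-> _] := @EN1 n (ltnW hn).
have [m [k [m2 mn k2 kb tk]]] := @block n j j1 ltac:(lia).
have [nz _] := @Hval n H m k m2 mn k2 kb.
have r1 : (2 ^ m - k = j)%N by lia.
by rewrite r1 in nz.
Qed.

Theorem lemma2p4 (n : nat) (hn : (2 <= n)%N)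
  (H : forall m k : nat, (2 <= m)%N -> (m <= n)%N ->
       (2 <= k)%N -> (k <= 2 ^ m.-1 + 1)%N ->
       v2_eqZ (stirling1 (2 ^ n) (2 ^ m - k))
         ((2 ^ n)%:Z - (2 ^ m)%:Z
          - (n - m)%:Z * ((2 ^ m)%:Z - 2 * (k %/ 2)%:Z)
          + m%:Z - 2 - (logn 2 (k %/ 2))%:Z
          + (n - 1)%:Z * (odd k)%:Z)) :
  forall t : nat, (1 <= t)%N -> (t <= 2 ^ n)%N ->
    v2 (stirling1m (2 ^ n) (2 ^ n) t) = v2 (stirling1 (2 ^ n) t) /\
    ext_le_add (v2 (stirling1 (2 ^ n) t)) 2
      (v2 (stirling1m (2 ^ n) (2 ^ n) t - stirling1 (2 ^ n) t)).
Proof.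
move=> t t1 tN.
have H' : Hfor n := H.
have hN : ~~ odd (2 ^ n) by rewrite oddX /=; case: (n) hn.
have hC := @chainC (En n) n (2 ^ n) hN (@hA n hn H') (@hB n hn H').
have nz := @nzs n hn H' t t1 tN.
set a := En n t.
set D := stirling1m (2 ^ n) (2 ^ n) t - stirling1 (2 ^ n) t.
have hD : ((2 ^ (a + 2))%:Z %| D)%Z.
  set Pp := (\prod_(i < 2 ^ n) ('X + (i%:R)%:P) : {poly int}).
  have ex : stirling1m (2 ^ n) (2 ^ n) t =
     \sum_(j < size Pp) stirling1 (2 ^ n) j *
        (((2 ^ n)%:R : int) ^+ (j - t) *+ 'C(j, t)).
    rewrite /stirling1m comp_eq coef_comp_poly; apply: eq_bigr => j _.
    by rewrite coefXaddC.
  have ht : (t < size Pp)%N.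
    rewrite ltnNge; apply/negP => le; move/negP: nz; apply.
    by rewrite /stirling1 -/Pp nth_default.
  rewrite /D ex (bigD1 (Ordinal ht)) //= subnn expr0 binn mulr1n mulr1 addrC addrK.
  apply: rpred_sum => j /= nej.
  have [ltj|lej] := ltnP j t.
    by rewrite bin_small // mulr0n mulr0 rpred0.
  have tj : (t < j)%N.
    rewrite ltn_neqAle lej andbT; apply/eqP => e; move: nej.
    by apply/negP; rewrite negbK; apply/eqP; apply: val_inj.
  have [jN|Nj] := leqP j (2 ^ n).
    rewrite -natrX -mulr_natr -natrM natz dvdzE abszM !absz_nat.
    have hc := hC t j t1 tj jN.
    have bdiv : (2 ^ (((j : nat) == t.+1) && odd t) %| 'C(j, t))%N.
      have [ej|nej'] := eqVneq (j : nat) t.+1; last by rewrite /= expn0 dvd1n.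
      rewrite ej /=.
      case ot: (odd t) => /=; last by rewrite expn0 dvd1n.
      by rewrite binSn expn1 dvdn2 /= ot.
    have e2 : ((2 ^ n) ^ (j - t) = 2 ^ (n * (j - t)))%N by rewrite expnM.
    rewrite e2.
    have mb : (n * (j - t) = n * j - n * t)%N by rewrite mulnBr.
    have mt : (n * t <= n * j)%N by rewrite leq_mul2l ltnW ?orbT.
    move: bdiv hc; rewrite -/a; case: (_ && _) => bdiv hc.
      apply: dvdn_trans (dvdn_mul (pfactor_dvdnn 2 `|stirling1 (2 ^ n) j|)
                          (dvdn_mul (dvdnn _) bdiv)).
      rewrite -!expnD dvdn_exp2l //; rewrite /En in hc; lia.
    apply: dvdn_trans (dvdn_mul (pfactor_dvdnn 2 `|stirling1 (2 ^ n) j|)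
                        (dvdn_mul (dvdnn _) bdiv)).
    rewrite -!expnD dvdn_exp2l //; rewrite /En in hc; lia.
  by rewrite stir_big // mul0r rpred0.
have eSD : stirling1m (2 ^ n) (2 ^ n) t = stirling1 (2 ^ n) t + D.
  by rewrite /D addrC subrK.
have vS : v2 (stirling1 (2 ^ n) t) = Some a by rewrite /v2 (negbTE nz).
rewrite vS; split; last first.
  rewrite /v2; case: (boolP (D == 0)) => [//|nzD] /=.
  exact: (@dvd_logn D (a + 2) nzD hD).
have h1 : ((2 ^ a.+1)%:Z %| D)%Z.
  apply: dvdz_trans hD; rewrite dvdzE !absz_nat dvdn_exp2l //; lia.
have ns := @ndvd_self _ nz; rewrite -/(En n t) -/a in ns.
have nzD : stirling1 (2 ^ n) t + D != 0.
  apply/eqP => e0; move/negP: ns; apply.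
  have -> : stirling1 (2 ^ n) t = - D by apply/eqP; rewrite -addr_eq0 e0.
  by rewrite rpredN.
rewrite eSD /v2 (negbTE nzD); congr Some.
apply: (@logn_int_eq _ a nzD).
  by rewrite rpredD // ?dvd_self //; apply: dvdz_trans h1; rewrite dvdzE !absz_nat dvdn_exp2l.
apply/negP => h; move/negP: ns; apply.
have -> : stirling1 (2 ^ n) t = (stirling1 (2 ^ n) t + D) - D by rewrite addrK.
by rewrite rpredB.
Qed.
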